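(* Let $t,k,q,r\in\mathbb{N}$. Let $\mathbf{I}_1$ be a $t$-boundaried CSP instance with $t$-boundaried incidence graph $(G,Z)$ such that $G$ admits no $(8^q,k+1)$-separation, and let $(H,J)$ be the $t$-boundaried incidence graph of a $t$-boundaried CSP instance $\mathbf{I}_2$ with $|V(H)|\le r$. Then the incidence graph $G\oplus H$ of $\mathbf{I}_1\oplus\mathbf{I}_2$ has no $(8^q+r,k+1)$-separation.
   Context: The incidence graph of a CSP instance is the bipartite graph on variables and constraints with $x\sim C$ iff $x$ in the scope of $C$. A $t$-boundaried incidence graph $(G,Z)$ is an incidence graph $G$ with a set $Z$ of at most $t$ variable vertices carrying distinct labels in $\{1,\dots,t\}$; a $t$-boundaried CSP instance is the corresponding instance. Gluing $(G,Z)\oplus(H,J)$ takes the disjoint union and identifies boundary vertices with equal labels. A $(q,k)$-separation of an incidence graph $G$ is a partition $(A,S,B)$ of $V(G)$ with $S$ consisting of variable vertices, $N(A),N(B)\subseteq S$, $|S|\le k$, $|A|,|B|\ge q$. *)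

(* Defs.v *)
From mathcomp Require Import all_boot.
Set Implicit Arguments. Unset Strict Implicit. Unset Printing Implicit Defensive.

Record csp (D : finType) := CSP {
  cvar : finType;
  ccon : finType;
  cscope : ccon -> seq cvar;
  crel : ccon -> pred (seq D)
}.

Definition ivert D (I : csp D) : finType := (cvar I + ccon I)%type.

Definition iadj D (I : csp D) : rel (ivert I) := fun u v =>
  match u, v with
  | inl x, inr c => x \in cscope c
  | inr c, inl x => x \in cscope c
  | _, _ => false
  end.

Definition is_var D (I : csp D) (v : ivert I) : bool :=
  if v is inl _ then true else false.

Definition nbhd D (I : csp D) (A : {set ivert I}) : {set ivert I} :=
  [set v | (v \notin A) && [exists u in A, iadj u v]].

Definition separation D (I : csp D) (q k : nat) (A S B : {set ivert I}) : Prop :=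
  [/\ [&& [disjoint A & S], [disjoint A & B] & [disjoint S & B]],
      A :|: S :|: B = setT,
      S \subset [set v | is_var v],
      (nbhd A \subset S) && (nbhd B \subset S) &
      [&& #|S| <= k, q <= #|A| & q <= #|B|] ].

Definition has_separation D (I : csp D) (q k : nat) : Prop :=
  exists A S B, @separation D I q k A S B.

(* t-boundaried CSP instance: boundary Z = variables carrying a label;
   labels (in 'I_t, i.e. {0,..,t-1} standing for {1,..,t}) are distinct. *)
Record bcsp (t : nat) (D : finType) := BCSP {
  binst :> csp D;
  blab : cvar binst -> option 'I_t;
  blab_inj : forall x y i, blab x = Some i -> blab y = Some i -> x = y
}.

Section Glue.
Variables (t : nat) (D : finType) (I1 I2 : bcsp t D).

Definition glued_with (x : cvar I2) (y : cvar I1) : bool :=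
  (@blab t D I2 x != None) && (@blab t D I1 y == @blab t D I2 x).

Definition matched (x : cvar I2) : bool := [exists y, glued_with x y].

Definition unmatched2 := {x : cvar I2 | ~~ matched x}.

(* variables of the glued instance: those of I1, plus those of I2 not
   identified with a boundary vertex of I1 *)
Definition gvar : finType := (cvar I1 + unmatched2)%type.

Lemma pick_none_unmatched (x : cvar I2) :
  [pick y | glued_with x y] = None -> ~~ matched x.
Proof.
case: pickP => // H _; apply/existsPn => y; by rewrite H.
Qed.

Definition inj2 (x : cvar I2) : gvar :=
  match [pick y | glued_with x y] as o
        return ([pick y | glued_with x y] = o -> gvar) with
  | Some y => fun _ => inl y
  | None => fun e => inr (exist _ x (pick_none_unmatched e))
  end erefl.

Definition gcon : finType := (ccon I1 + ccon I2)%type.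

Definition gscope (c : gcon) : seq gvar :=
  match c with
  | inl c1 => map inl (cscope c1)
  | inr c2 => map inj2 (cscope c2)
  end.

Definition grel (c : gcon) : pred (seq D) :=
  match c with
  | inl c1 => crel c1
  | inr c2 => crel c2
  end.

Definition glue : csp D := @CSP D gvar gcon gscope grel.
End Glue.

(* Main.v *)
Require Import Defs.
From mathcomp Require Import all_boot.
From mathcomp Require Import zify.
Set Implicit Arguments. Unset Strict Implicit. Unset Printing Implicit Defensive.

Section Emb.
Variables (t : nat) (D : finType) (I1 I2 : bcsp t D).

Definition emb (v : ivert (binst I1)) : ivert (glue I1 I2) :=
  match v with inl x => inl (inl x) | inr c => inr (inl c) end.

Lemma emb_inj : injective emb.
Proof. by case=> [x|c] [y|d] //= [->]. Qed.

Lemma emb_adj u v : iadj (emb u) (emb v) = iadj u v.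
Proof.
by case: u v => [x|c] [y|d] //=; rewrite mem_map // => a b [].
Qed.

Lemma emb_var v : is_var (emb v) = is_var v.
Proof. by case: v. Qed.

Lemma disj_pre (A B : {set ivert (glue I1 I2)}) :
  [disjoint A & B] -> [disjoint emb @^-1: A & emb @^-1: B].
Proof.
rewrite !disjoints_subset => /subsetP H; apply/subsetP=> x.
by rewrite !inE => /H; rewrite inE.
Qed.

Lemma card_pre_le (S : {set ivert (glue I1 I2)}) : #|emb @^-1: S| <= #|S|.
Proof.
rewrite -(card_imset _ emb_inj); apply: subset_leq_card.
by apply/subsetP=> y /imsetP [x]; rewrite inE => Hx ->.
Qed.

Lemma card_compl :
  #|~: (emb @: [set: ivert (binst I1)])| <= #|ivert (binst I2)|.
Proof.
have := cardsC (emb @: [set: ivert (binst I1)]).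
rewrite card_imset ?cardsT; last exact: emb_inj.
rewrite /ivert /= !card_sum.
have Hu : #|{: unmatched2 I1 I2}| <= #|cvar (binst I2)|.
  by apply: (@leq_card _ _ val); exact: val_inj.
move=> E.
have : #|~: (emb @: [set: ivert (binst I1)])| =
   #|{: unmatched2 I1 I2}| + #|ccon (binst I2)|.
  apply: (@addnI (#|cvar (binst I1)| + #|ccon (binst I1)|)); rewrite E.
  by rewrite -!addnA; congr (_ + _); rewrite addnCA.
move=> ->; exact: leq_add.
Qed.

Lemma card_pre_ge (A : {set ivert (glue I1 I2)}) :
  #|A| <= #|emb @^-1: A| + #|ivert (binst I2)|.
Proof.
apply: leq_trans (leq_add (leqnn _) card_compl).
rewrite -(card_imset (emb @^-1: A) emb_inj).
apply: leq_trans (leq_card_setU _ _).1.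
apply: subset_leq_card; apply/subsetP=> y Hy; rewrite !inE.
case/boolP: (y \in emb @: setT) => [/imsetP [x _ Ex]|_]; last by rewrite orbT.
by rewrite orbF Ex; apply: imset_f; rewrite inE -Ex.
Qed.
End Emb.

Theorem lemma12 (t k q r : nat) (D : finType) (I1 I2 : bcsp t D) :
  ~ has_separation (binst I1) (8 ^ q) k.+1 ->
  #|ivert (binst I2)| <= r ->
  ~ has_separation (glue I1 I2) (8 ^ q + r) k.+1.
Proof.
move=> Hno Hr [A [S [B [/and3P [dAS dAB dSB] U Svar /andP [NA NB] /and3P [cS cA cB]]]]].
apply: Hno.
exists (emb I2 @^-1: A), (emb I2 @^-1: S), (emb I2 @^-1: B); split.
- by rewrite !disj_pre.
- apply/setP=> v; rewrite !inE.
  by have := in_setT (emb I2 v); rewrite -U !inE.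
- apply/subsetP=> v; rewrite !inE => /(subsetP Svar); rewrite inE emb_var.
  done.
- apply/andP; split; apply/subsetP=> v; rewrite !inE => /andP [Hv /existsP [u /andP [Hu Ha]]].
  + apply: (subsetP NA); rewrite inE Hv /=; apply/existsP; exists (emb I2 u).
    by rewrite emb_adj Ha andbT; move: Hu; rewrite inE.
  + apply: (subsetP NB); rewrite inE Hv /=; apply/existsP; exists (emb I2 u).
    by rewrite emb_adj Ha andbT; move: Hu; rewrite inE.
- apply/and3P; split.
  + exact: leq_trans (card_pre_le S) cS.
  + have := card_pre_ge A; move: cA Hr; clear; lia.
  + have := card_pre_ge B; move: cB Hr; clear; lia.
Qed.
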